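(* Let $(G,L_G)$ be a labeled graph presenting a sofic shift $Y=L_G(X_G)$. Then the future cover $(\mathbb K(Y),L_{\mathbb K(Y)})$ of $Y$ is isomorphic, as a labeled graph, to the merged graph $([\underline{G}],L_{[\underline{G}]})$ of $(\underline{G},L_{\underline{G}})$, via the map $F(y)\mapsto f_{\underline{G}}(D^y)$ on vertices.
   Context: A labeled graph $(G,L_G)$: finite directed graph (vertices $V_G$, edges $E_G$, source/terminal maps $s_G,t_G$) without sinks or sources, labeling $L_G:E_G\to A$, edge shift $X_G$, presenting $Y=L_G(X_G)$. For a labeled graph $(H,L_H)$ and vertex $v$, $f_H(v)=\{L_H(x): x$ a right-infinite path starting at $v\}$. Construction of $\underline{G}$: for a non-empty $D\subseteq V_G$ and $a\in A$ let $[D,a]=\{t_G(e): e\in E_G, s_G(e)\in D, L_G(e)=a\}$. For $y\in Y$ let $D^y$ be the set of terminal vertices of left-infinite paths $x=\cdots x_{-2}x_{-1}$ in $G$ with $L_G(x)=y_{(-\infty,-1]}$. The labeled graph $(\underline{G},L_{\underline{G}})$ has vertex set $\{D^y: y\in Y\}$, and for each vertex $D$ and each $a\in A$ with $[D,a]\neq\emptyset$ one edge $(D,a)$ from $D$ to $[D,a]$ labeled $a$. Merged graph of a labeled graph $(H,L_H)$: vertices are the distinct sets $f_H(v)$, $v\in V_H$; there is an edge labeled $a$ from $f_H(v)$ to $f_H(w)$ when there are vertices $v',w'$ with $f_H(v')=f_H(v)$, $f_H(w')=f_H(w)$ and an edge labeled $a$ from $v'$ to $w'$ in $H$ (one edge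 per such pair and label). Future cover: for $y\in Y$ let $F(y)=\{w\in Y[0,\infty): y_{(-\infty,-1]}w\in Y\}$ with $Y[0,\infty)=\{y_{[0,\infty)}:y\in Y\}$; $(\mathbb K(Y),L_{\mathbb K(Y)})$ has vertices the distinct sets $F(y)$ and an edge labeled $a$ from $F(y)$ to $F(z)$ exactly when $F(z)=\{w\in A^{\mathbb N}: aw\in F(y)\}$ (one edge per such pair and label). *)

(* Defs.v *)
From mathcomp Require Import all_boot.
From Stdlib Require Import ZArith.

Set Implicit Arguments.
Unset Strict Implicit.
Unset Printing Implicit Defensive.

Record lgraph (A : Type) := LGraph {
  lvert : Type;
  ledge : Type;
  lsrc : ledge -> lvert;
  ltgt : ledge -> lvert;
  llab : ledge -> A }.

Definition rseq (A : Type) := nat -> A.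

Definition rpath_from (A : Type) (H : lgraph A) (v : lvert H)
    (x : nat -> ledge H) : Prop :=
  lsrc (x 0%N) = v /\ forall n : nat, ltgt (x n) = lsrc (x n.+1).

Definition follower (A : Type) (H : lgraph A) (v : lvert H) : rseq A -> Prop :=
  fun w => exists x : nat -> ledge H, rpath_from v x /\ forall n, w n = llab (x n).

Definition merged_vert (A : Type) (H : lgraph A) :=
  { S : rseq A -> Prop | exists v : lvert H, S = follower v }.

Definition merged_edge (A : Type) (H : lgraph A) :=
  { p : merged_vert H * A * merged_vert H |
    exists e : ledge H,
      follower (lsrc e) = sval p.1.1 /\ follower (ltgt e) = sval p.2 /\
      llab e = p.1.2 }.

Definition merged (A : Type) (H : lgraph A) : lgraph A :=
  @LGraph A (merged_vert H) (merged_edge H)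
    (fun e => (sval e).1.1) (fun e => (sval e).2) (fun e => (sval e).1.2).

Definition lgraph_iso (A : Type) (H1 H2 : lgraph A)
    (phiV : lvert H1 -> lvert H2) (phiE : ledge H1 -> ledge H2) : Prop :=
  bijective phiV /\ bijective phiE /\
  (forall e, lsrc (phiE e) = phiV (lsrc e)) /\
  (forall e, ltgt (phiE e) = phiV (ltgt e)) /\
  (forall e, llab (phiE e) = llab e).

Section G.
Variables (A V E : finType) (s t : E -> V) (L : E -> A).

Definition no_sinks : Prop := forall v : V, exists e : E, s e = v.
Definition no_sources : Prop := forall v : V, exists e : E, t e = v.

Definition asG : lgraph A := @LGraph A V E s t L.

Definition edge_shift (x : Z -> E) : Prop :=
  forall i : Z, t (x i) = s (x (i + 1)%Z).

Definition sofic (y : Z -> A) : Prop :=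
  exists x : Z -> E, edge_shift x /\ forall i : Z, y i = L (x i).

Definition follow_set (D : V -> Prop) (a : A) : V -> Prop :=
  fun v => exists e : E, D (s e) /\ L e = a /\ t e = v.

(* D^y : terminal vertices of left-infinite paths labeled y_(-oo,-1].
   A left-infinite path ... x_{-2} x_{-1} is encoded by x : nat -> E with
   x k = x_{-(k+1)}. *)
Definition Dy (y : Z -> A) : V -> Prop :=
  fun v => exists x : nat -> E,
    (forall k : nat, t (x k.+1) = s (x k)) /\
    (forall k : nat, L (x k) = y (- Z.of_nat k.+1)%Z) /\
    t (x 0%N) = v.

Definition ul_vert := { D : V -> Prop | exists y, sofic y /\ D = Dy y }.

Definition ul_edge :=
  { p : ul_vert * A * ul_vert |
    (exists v, follow_set (sval p.1.1) p.1.2 v) /\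
    sval p.2 = follow_set (sval p.1.1) p.1.2 }.

Definition ulG : lgraph A :=
  @LGraph A ul_vert ul_edge
    (fun e => (sval e).1.1) (fun e => (sval e).2) (fun e => (sval e).1.2).

Definition Yplus (w : rseq A) : Prop :=
  exists y, sofic y /\ forall n : nat, w n = y (Z.of_nat n).

Definition concat_past (y : Z -> A) (w : rseq A) : Z -> A :=
  fun i => if (i <? 0)%Z then y i else w (Z.to_nat i).

Definition future (y : Z -> A) : rseq A -> Prop :=
  fun w => Yplus w /\ sofic (concat_past y w).

Definition rcons_seq (a : A) (w : rseq A) : rseq A :=
  fun n => match n with O => a | S n' => w n' end.

Definition K_vert := { S : rseq A -> Prop | exists y, sofic y /\ S = future y }.

Definition K_edge :=
  { p : K_vert * A * K_vert |
    sval p.2 = (fun w => sval p.1.1 (rcons_seq p.1.2 w)) }.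

Definition futureCover : lgraph A :=
  @LGraph A K_vert K_edge
    (fun e => (sval e).1.1) (fun e => (sval e).2) (fun e => (sval e).1.2).

End G.

(* Main.v *)
Require Import Defs.
From mathcomp Require Import all_boot.
From Stdlib Require Import ZArith.
From Stdlib Require Import Lia FunctionalExtensionality PropExtensionality ProofIrrelevance ClassicalEpsilon Classical.

Section Proofs.
Variables (A V E : finType) (s t : E -> V) (L : E -> A).

Lemma sig_eqP (T : Type) (P : T -> Prop) (p q : {x | P x}) :
  proj1_sig p = proj1_sig q -> p = q.
Proof. apply: eq_sig_hprop => x a b; apply: proof_irrelevance. Qed.

Lemma pred_ext (T : Type) (P Q : T -> Prop) : (forall x, P x <-> Q x) -> P = Q.
Proof. move=> H; apply: functional_extensionality => x; apply: propositional_extensionality; apply: H. Qed.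

Lemma sofic_shift (z : Z -> A) (k : Z) :
  sofic s t L z -> sofic s t L (fun i => z (i + k)%Z).
Proof.
move=> [X [HX HL]]; exists (fun i => X (i + k)%Z); split.
- move=> i; rewrite HX; do 2 f_equal; lia.
- move=> i; apply: HL.
Qed.

Lemma sofic_ext (z1 z2 : Z -> A) : sofic s t L z1 -> (forall i, z1 i = z2 i) -> sofic s t L z2.
Proof. move=> [X [HX HL]] H; exists X; split => // i; rewrite -H; apply: HL. Qed.

Lemma Dy_ext (y1 y2 : Z -> A) : (forall i, (i < 0)%Z -> y1 i = y2 i) ->
  Dy s t L y1 = Dy s t L y2.
Proof.
move=> H; apply: pred_ext => v; split; move=> [x [h1 [h2 h3]]]; exists x;
  (split; first done); (split; last done) => k; rewrite h2 ?H // -?H //; lia.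
Qed.

Lemma Dy_shift (z : Z -> A) :
  Dy s t L (fun i => z (i + 1)%Z) = follow_set s t L (Dy s t L z) (z 0%Z).
Proof.
apply: pred_ext => v; split.
- move=> [x [h1 [h2 h3]]]; exists (x 0%nat); split; last split.
  + exists (fun k => x k.+1); split; first by move=> k; apply: h1.
    split; last by apply: h1.
    move=> k; rewrite h2; f_equal; lia.
  + rewrite h2; f_equal; lia.
  + exact: h3.
- move=> [e [[x [h1 [h2 h3]]] [he hv]]].
  exists (fun k => if k is k'.+1 then x k' else e); split; last split.
  + case=> [|k] /=; [exact: h3 | exact: h1].
  + case=> [|k]; cbv beta iota; first by rewrite he; f_equal; lia.
    rewrite h2; f_equal; lia.
  + exact: hv.
Qed.

Lemma sofic_Dy (z : Z -> A) : sofic s t L z -> exists v, Dy s t L z v.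
Proof.
move=> [X [HX HL]]; exists (t (X (-1)%Z)).
exists (fun k => X (- Z.of_nat k.+1)%Z); split; last split.
- move=> k; rewrite HX; do 2 f_equal; lia.
- move=> k; by rewrite HL.
- done.
Qed.

Lemma future_iff (y : Z -> A) (w : rseq A) :
  future s t L y w <-> sofic s t L (concat_past y w).
Proof.
split; first by case.
move=> H; split=> //; exists (concat_past y w); split=> // n.
rewrite /concat_past.
have -> : (Z.of_nat n <? 0)%Z = false by apply Z.ltb_ge; lia.
by rewrite Nat2Z.id.
Qed.

Definition ulv_of (z : Z -> A) (Hz : sofic s t L z) : ul_vert s t L :=
  exist _ (Dy s t L z) (ex_intro _ z (conj Hz erefl)).
Arguments ulv_of [z].

Lemma ul_step (e : ledge (ulG s t L)) (w : rseq A) :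
  follower (ltgt e) w <-> follower (lsrc e) (rcons_seq (llab e) w).
Proof.
split.
- move=> [x [[h0 hp] hl]].
  exists (fun n => if n is n'.+1 then x n' else e); split; first split.
  + done.
  + case=> [|n] /=; [exact: (esym h0) | exact: hp].
  + case=> [|n] //=.
- move=> [x [[h0 hp] hl]].
  have hl0 := hl 0%nat; simpl in hl0.
  have ht : ltgt (x 0%nat) = ltgt e.
    apply: sig_eqP.
    case: (proj2_sig (x 0%nat)) => _ ->; case: (proj2_sig e) => _ ->.
    simpl in h0 |- *. by rewrite h0 hl0.
  exists (fun n => x n.+1); split; first split.
  + by rewrite -hp.
  + move=> n; exact: hp.
  + move=> n; exact: (hl n.+1).
Qed.

Lemma future_follower (y : Z -> A) (d : ul_vert s t L) (w : rseq A) :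
  sofic s t L y -> sval d = Dy s t L y -> future s t L y w -> follower (H:=ulG s t L) d w.
Proof.
move=> Hy Hd /future_iff Hz.
set z := concat_past y w in Hz.
pose yn (n : nat) := fun i => z (i + Z.of_nat n)%Z.
have Hyn : forall n, sofic s t L (yn n) by move=> n; apply: sofic_shift.
have HDS : forall n, Dy s t L (yn n.+1) = follow_set s t L (Dy s t L (yn n)) (w n).
  move=> n.
  have -> : w n = yn n 0%Z.
    rewrite /yn /z /concat_past /=.
    have -> : (Z.of_nat n <? 0)%Z = false by apply Z.ltb_ge; lia.
    by rewrite Nat2Z.id.
  rewrite -Dy_shift; apply: Dy_ext => i _; rewrite /yn; f_equal; lia.
have Hedge : forall n,
   (exists v, follow_set s t L (sval (ulv_of (Hyn n))) (w n) v) /\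
   sval (ulv_of (Hyn n.+1)) = follow_set s t L (sval (ulv_of (Hyn n))) (w n).
  move=> n; rewrite /= -HDS; split=> //; exact: sofic_Dy.
exists (fun n => exist _ (ulv_of (Hyn n), w n, ulv_of (Hyn n.+1)) (Hedge n) : ledge (ulG s t L)).
split; first split.
- apply: sig_eqP; rewrite /= Hd; apply: Dy_ext => i Hi.
  rewrite /yn /z /concat_past Z.add_0_r.
  by have -> : (i <? 0)%Z = true by apply Z.ltb_lt.
- done.
- done.
Qed.

Fixpoint reach (w : rseq A) (n m : nat) (v : V) : Prop :=
  match m with
  | 0 => True
  | m'.+1 => exists e, s e = v /\ L e = w n /\ reach w n.+1 m' (t e)
  end.

Lemma reach_le w m : forall n v m', le m' m -> reach w n m v -> reach w n m' v.
Proof.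
elim: m => [|m IH] n v m' Hle H.
- by have -> : m' = 0 by lia.
- case: m' Hle => [|m'] Hle //=.
  move: H => [e [h1 [h2 h3]]]; exists e; split=> //; split=> //.
  apply: (IH _ _ _ _ h3); lia.
Qed.

Lemma pigeon (T : finType) (P : T -> nat -> Prop) :
  (forall x m m', le m' m -> P x m -> P x m') ->
  (forall m, exists x, P x m) -> exists x, forall m, P x m.
Proof.
move=> Hmono Hex; apply: NNPP => Hn.
have Hb : forall l : seq T, exists M, forall x, x \in l -> ~ P x M.
  elim=> [|a l [M HM]]; first by exists 0.
  have [ma Hma] : exists m, ~ P a m.
    apply: NNPP => H1; apply: Hn; exists a => m; apply: NNPP => H2; apply: H1; by exists m.
  exists (Nat.max M ma) => x; rewrite inE => /orP [/eqP -> | Hx] HP.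
  + apply: Hma; apply: (Hmono _ _ _ _ HP); lia.
  + apply: (HM x Hx); apply: (Hmono _ _ _ _ HP); lia.
have [M HM] := Hb (enum T).
have [x Hx] := Hex M.
by apply: (HM x); first by rewrite mem_enum.
Qed.

Lemma follower_future (y : Z -> A) (d : ul_vert s t L) (w : rseq A) :
  sval d = Dy s t L y -> follower (H:=ulG s t L) d w -> future s t L y w.
Proof.
move=> Hd [x [[h0 hp] hl]].
apply/future_iff.
pose D (n : nat) := sval (lsrc (x n)).
have HD0 : D 0%nat = Dy s t L y by rewrite /D h0.
have HDS : forall n, D n.+1 = follow_set s t L (D n) (w n).
  move=> n; rewrite /D -hp hl; by case: (proj2_sig (x n)).
have HDne : forall n, exists v, D n v.
  move=> n; case: (proj2_sig (x n)) => [[v [e [He _]]] _]; by exists (s e).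
have Hback : forall m k u, D (k + m)%nat u -> exists v, D k v /\ reach w k m v.
  elim=> [|m IH] k u Hu.
  - exists u; split=> //; by rewrite addn0 in Hu.
  - rewrite addnS -addSn in Hu.
    have [v' [Hv' Hr]] := IH _ _ Hu.
    rewrite HDS in Hv'; case: Hv' => [e [He1 [He2 He3]]].
    exists (s e); split=> //; exists e; split=> //; split=> //; by rewrite He3.
pose good n v := forall m, reach w n m v.
have Hstep : forall n v, good n v -> exists e, s e = v /\ L e = w n /\ good n.+1 (t e).
  move=> n v Hg.
  have [e He] := @pigeon _ (fun e m => s e = v /\ L e = w n /\ reach w n.+1 m (t e))
    (fun e m m' Hle '(conj a (conj b c)) => conj a (conj b (reach_le _ _ _ _ _ Hle c)))
    (fun m => Hg m.+1).
  exists e; split; first by case: (He 0%nat).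
  split; first by case: (He 0%nat) => _ [].
  move=> m; by case: (He m) => _ [].
have [v0 Hv0] := @pigeon _ (fun v m => D 0%nat v /\ reach w 0 m v)
    (fun v m m' Hle '(conj a b) => conj a (reach_le _ _ _ _ _ Hle b))
    (fun m => let: ex_intro u Hu := HDne m in Hback m 0%nat u Hu).
have Hg0 : good 0%nat v0 by move=> m; case: (Hv0 m).
have HDv0 : Dy s t L y v0 by rewrite -HD0; case: (Hv0 0%nat).
have [e0 _] := Hstep _ _ Hg0.
pose g n v := epsilon (inhabits e0) (fun e => s e = v /\ L e = w n /\ good n.+1 (t e)).
have Hgs : forall n v, good n v -> s (g n v) = v /\ L (g n v) = w n /\ good n.+1 (t (g n v)).
  move=> n v Hg; exact: (epsilon_spec (inhabits e0) (fun e => s e = v /\ L e = w n /\ good n.+1 (t e)) (Hstep n v Hg)).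
pose fix vs n := if n is n'.+1 then t (g n' (vs n')) else v0.
have Hvs : forall n, good n (vs n) by elim=> [|n IH] //=; case: (Hgs _ _ IH) => _ [].
pose es n := g n (vs n).
have Hes1 : forall n, s (es n) = vs n by move=> n; case: (Hgs _ _ (Hvs n)).
have Hes2 : forall n, L (es n) = w n by move=> n; case: (Hgs _ _ (Hvs n)) => _ [].
case: HDv0 => [xl [h1 [h2 h3]]].
exists (fun i => if (i <? 0)%Z then xl (Z.to_nat (- i - 1)) else es (Z.to_nat i)).
split.
- move=> i.
  case: (Z.ltb_spec i 0) => Hi; case: (Z.ltb_spec (i + 1) 0) => Hi1.
  + have -> : Z.to_nat (- i - 1) = (Z.to_nat (- (i + 1) - 1)).+1 by lia.
    exact: h1.
  + have -> : Z.to_nat (- i - 1) = 0%nat by lia.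
    have -> : Z.to_nat (i + 1) = 0%nat by lia.
    by rewrite h3 Hes1.
  + lia.
  + have -> : Z.to_nat (i + 1) = (Z.to_nat i).+1 by lia.
    by rewrite Hes1.
- move=> i; rewrite /concat_past.
  case: (Z.ltb_spec i 0) => Hi.
  + rewrite h2; f_equal; lia.
  + by rewrite Hes2.
Qed.

Lemma key (y : Z -> A) (d : ul_vert s t L) :
  sofic s t L y -> sval d = Dy s t L y -> follower (H:=ulG s t L) d = future s t L y.
Proof.
move=> Hy Hd; apply: pred_ext => w; split.
- exact: follower_future.
- exact: future_follower.
Qed.

Lemma K_to_M (u : K_vert s t L) : exists v : lvert (ulG s t L), sval u = follower v.
Proof.
case: (proj2_sig u) => y [Hy Hu]; exists (ulv_of Hy); by rewrite Hu (key _ (ulv_of Hy) Hy erefl).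
Qed.

Lemma M_to_K (m : merged_vert (ulG s t L)) :
  exists y, sofic s t L y /\ sval m = future s t L y.
Proof.
case: (proj2_sig m) => v Hm; case: (proj2_sig v) => y [Hy Hv].
exists y; split=> //; by rewrite Hm (key _ _ Hy Hv).
Qed.

Definition phiV (u : K_vert s t L) : merged_vert (ulG s t L) := exist _ (sval u) (K_to_M u).
Definition psiV (m : merged_vert (ulG s t L)) : K_vert s t L := exist _ (sval m) (M_to_K m).

Lemma phiVK : cancel phiV psiV. Proof. by move=> u; apply: sig_eqP. Qed.
Lemma psiVK : cancel psiV phiV. Proof. by move=> u; apply: sig_eqP. Qed.

Lemma K_edge_to_M (u u' : K_vert s t L) (a : A) :
  sval u' = (fun w => sval u (rcons_seq a w)) ->
  exists e : ledge (ulG s t L),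
    follower (lsrc e) = sval u /\ follower (ltgt e) = sval u' /\ llab e = a.
Proof.
move=> Hu'.
case: (proj2_sig u) => y [Hy Hu]; case: (proj2_sig u') => y' [Hy' Hu'2].
pose w0 := fun n : nat => y' (Z.of_nat n).
have Hw0 : future s t L y' w0.
  apply/future_iff; apply: (sofic_ext _ _ Hy') => i; rewrite /concat_past /w0.
  case: (Z.ltb_spec i 0) => Hi //; f_equal; lia.
have : sval u (rcons_seq a w0) by move: Hw0; rewrite -Hu'2 Hu'.
rewrite Hu => /future_iff Hz0.
set z0 := concat_past y (rcons_seq a w0) in Hz0.
have Hzz := sofic_shift _ 1 Hz0.
have HDz : Dy s t L (fun i => z0 (i + 1)%Z) = follow_set s t L (Dy s t L y) a.
  rewrite Dy_shift.
  have -> : z0 0%Z = a by [].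
  have -> : Dy s t L z0 = Dy s t L y.
    apply: Dy_ext => i Hi; rewrite /z0 /concat_past.
    by have -> : (i <? 0)%Z = true by apply Z.ltb_lt.
  done.
have Hedge : (exists v, follow_set s t L (sval (ulv_of Hy)) a v) /\
   sval (ulv_of Hzz) = follow_set s t L (sval (ulv_of Hy)) a.
  rewrite /= -HDz; split=> //; exact: sofic_Dy.
exists (exist _ (ulv_of Hy, a, ulv_of Hzz) Hedge : ledge (ulG s t L)).
have Hsrc : follower (H:=ulG s t L) (ulv_of Hy) = sval u by rewrite Hu (key _ (ulv_of Hy) Hy erefl).
split; first by rewrite -Hu; exact Hsrc.
split; last done.
rewrite Hu'; apply: pred_ext => w.
rewrite (ul_step (exist _ (ulv_of Hy, a, ulv_of Hzz) Hedge : ledge (ulG s t L))) /=.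
by rewrite -Hsrc.
Qed.

Lemma M_edge_to_K (m m' : merged_vert (ulG s t L)) (a : A) (e : ledge (ulG s t L)) :
  follower (lsrc e) = sval m -> follower (ltgt e) = sval m' -> llab e = a ->
  sval m' = (fun w => sval m (rcons_seq a w)).
Proof.
move=> H1 H2 H3; rewrite -H1 -H2 -H3; apply: pred_ext => w; exact: ul_step.
Qed.

Definition phiE (k : K_edge s t L) : merged_edge (ulG s t L) :=
  exist _ (phiV (sval k).1.1, (sval k).1.2, phiV (sval k).2)
    (K_edge_to_M _ _ _ (proj2_sig k)).

Lemma psiE_proof (k : merged_edge (ulG s t L)) :
  sval (psiV (sval k).2) = (fun w => sval (psiV (sval k).1.1) (rcons_seq (sval k).1.2 w)).
Proof.
case: (proj2_sig k) => e [H1 [H2 H3]]; exact: (M_edge_to_K _ _ _ _ H1 H2 H3).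
Qed.

Definition psiE (k : merged_edge (ulG s t L)) : K_edge s t L :=
  exist _ (psiV (sval k).1.1, (sval k).1.2, psiV (sval k).2) (psiE_proof k).

Lemma phiEK : cancel phiE psiE.
Proof.
move=> k; apply: sig_eqP; rewrite /= !phiVK; by case: (sval k) => [[]].
Qed.
Lemma psiEK : cancel psiE phiE.
Proof.
move=> k; apply: sig_eqP; rewrite /= !psiVK; by case: (sval k) => [[]].
Qed.

End Proofs.

Theorem corollary5p5 (A V E : finType) (s t : E -> V) (L : E -> A)
  (Hsink : no_sinks s) (Hsrc : no_sources t) :
  exists (phiV : lvert (futureCover s t L) -> lvert (merged (ulG s t L)))
         (phiE : ledge (futureCover s t L) -> ledge (merged (ulG s t L))),
    lgraph_iso phiV phiE /\
    forall (y : Z -> A), sofic s t L y ->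
    forall (u : lvert (futureCover s t L)) (d : lvert (ulG s t L)),
      sval u = future s t L y -> sval d = Dy s t L y ->
      sval (phiV u) = follower d.
Proof.
exists (@phiV A V E s t L), (@phiE A V E s t L).
split.
- split; first exact: Bijective (@phiVK A V E s t L) (@psiVK A V E s t L).
  split; first exact: Bijective (@phiEK A V E s t L) (@psiEK A V E s t L).
  by split; [|split].
- move=> y Hy u d Hu Hd /=; rewrite Hu; symmetry; exact: key.
Qed.
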